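(* Let $p$ be a prime, let $M$ be an elementary abelian $p$-group (written multiplicatively), and let $1\to \mathbb{Z}/p\to \hat M\to M\to 1$ be a Frattini extension of groups with kernel of order $p$ (so $\hat M$ is a $p$-group and the kernel is central). For $m\in M$ let $\hat m$ denote a lift of $m$ to $\hat M$. Let $V^0$ be the set of nonidentity $m\in M$ whose lifts to $\hat M$ have order $p$, and $V=V^0\cup\{1\}$. Let $m_1,m_2\in M$ with $\langle m_1,m_2\rangle$ of rank $2$, and let $\langle \hat m_1,\hat m_2\rangle$ be the subgroup of $\hat M$ generated by lifts of them. (i) If $m_1,m_2\in V$: when $p=2$, $\langle\hat m_1,\hat m_2\rangle$ is either a Klein $4$-group or the dihedral group $D_4$ of order $8$; when $p\ne 2$, it is either $(\mathbb{Z}/p)^2$, or $U_p$, or it is $H_p$ and the commutator $(\hat m_1,\hat m_2)$ generates the kernel of $\langle\hat m_1,\hat m_2\rangle\to\langle m_1,m_2\rangle$. (ii) If $m_1,m_2\in M\setminus V$: when $p=2$, $\langle\hat m_1,\hat m_2\rangle$ is either $\mathbb{Z}/4\times\mathbb{Z}/2$ or the quaternion group $Q_8$; when $p\ne 2$, it is either $\mathbb{Z}/p^2\times\mathbb{Z}/p$ or $U_p$. (iii) If $m_1\in V^0$ and $m_2\in M\setminus V$, then $\langle\hat m_1,\hat m_2\rangle$ is either $\mathbb{Z}/p^2\times\mathbb{Z}/p$ or $U_p$.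
   Context: $U_p=\mathbb{Z}/p^2\rtimes\mathbb{Z}/p$, where a generator of $\mathbb{Z}/p$ acts on $\mathbb{Z}/p^2$ by sending $1$ to $1+ap$ for some $a$ prime to $p$. $H_p$ is the Heisenberg group of order $p^3$ (unipotent upper triangular $3\times3$ matrices over $\mathbb{F}_p$). Since the kernel is central, $\hat m^p$ depends only on $m$. *)

(* Defs.v *)
From mathcomp Require Import all_boot all_algebra all_fingroup all_solvable.

Set Implicit Arguments.
Unset Strict Implicit.
Unset Printing Implicit Defensive.

Local Open Scope group_scope.

Definition V0 (gT rT : finGroupType) (Mhat : {group gT})
    (f : {morphism Mhat >-> rT}) (M : {set rT}) (p : nat) : {set rT} :=
  [set m in M | (m != 1) && [forall x in Mhat, (f x == m) ==> (#[x] == p)]].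

Definition V (gT rT : finGroupType) (Mhat : {group gT})
    (f : {morphism Mhat >-> rT}) (M : {set rT}) (p : nat) : {set rT} :=
  1 |: V0 f M p.

(* U_p = Z/p^2 ⋊ Z/p, a generator of Z/p acting on Z/p^2 by 1 |-> 1 + a p,
   a prime to p.  Extremal.gtype q p e is MathComp's semidirect product
   'Z_q ⋊ 'Z_p in which the generator 1 of 'Z_p conjugates 1 of 'Z_q to e. *)
Definition Up_type (p a : nat) : finGroupType :=
  Extremal.gtype (p ^ 2) p (1 + a * p).

Definition isog_Up (gT : finGroupType) (G : {set gT}) (p : nat) : Prop :=
  exists a : nat, coprime a p /\ G \isog [set: Up_type p a].

Definition Heis (p : nat) : {set {'GL_3['F_p]}} :=
  [set g : {'GL_3['F_p]} | [forall i : 'I_3, forall j : 'I_3,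
      ((j < i)%N ==> (GLval g i j == 0%R)) && ((i == j) ==> (GLval g i j == 1%R))]].

(* Main.v *)
Require Import Defs.
From mathcomp Require Import all_boot all_algebra all_fingroup all_solvable.
From mathcomp Require Import ring.
Set Implicit Arguments. Unset Strict Implicit. Unset Printing Implicit Defensive.
Import GRing.Theory.

Section Heis.
Variable p : nat.
Local Open Scope ring_scope.

Definition hm (a b c : 'F_p) : 'M['F_p]_3 :=
  \matrix_(i < 3, j < 3) nth 0 (nth [::] [:: [:: 1; a; b]; [:: 0; 1; c]; [:: 0; 0; 1]] i) j.

Lemma hmM a b c a' b' c' :
  hm a b c *m hm a' b' c' = hm (a + a') (b + b' + a * c') (c + c').
Proof.
apply/matrixP=> i j; rewrite !mxE !big_ord_recl big_ord0 !mxE.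
case: i => [[|[|[|i]]] Hi] //; case: j => [[|[|[|j]]] Hj] //=; ring.
Qed.

Lemma hm0 : hm 0 0 0 = 1%:M.
Proof.
apply/matrixP=> i j; rewrite !mxE.
by case: i => [[|[|[|i]]] Hi] //; case: j => [[|[|[|j]]] Hj].
Qed.
End Heis.

Section Heis2.
Variable p : nat.
Hypothesis p_pr : prime p.
Local Open Scope ring_scope.

Lemma hm_unit (a b c : 'F_p) : hm a b c \is a GRing.unit.
Proof.
have [] := @mulmx1_unit _ _ (hm a b c) (hm (- a) (a * c - b) (- c)).
  rewrite hmM -hm0; congr hm; ring.
by [].
Qed.

Definition hg (a b c : 'F_p) : {'GL_3['F_p]} := FinRing.unit _ (hm_unit a b c).

Lemma hgE a b c : GLval (hg a b c) = hm a b c. Proof. by []. Qed.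

Lemma hgM a b c a' b' c' :
  (hg a b c * hg a' b' c')%g = hg (a + a') (b + b' + a * c') (c + c').
Proof. by apply: val_inj; rewrite /= -hmM. Qed.

Lemma hg0 : hg 0 0 0 = 1%g.
Proof. by apply: val_inj; rewrite /= hm0. Qed.

Lemma hg_inj a b c a' b' c' : hg a b c = hg a' b' c' -> [/\ a = a', b = b' & c = c'].
Proof.
move=> E; have E' := congr1 GLval E; rewrite !hgE in E'.
have e := fun i j => congr1 (fun M : 'M_3 => M i j) E'.
move: (e 0 1) (e 0 2) (e 1 2); rewrite !mxE /=. done.
Qed.

Lemma Heis_hg a b c : hg a b c \in Heis p.
Proof.
rewrite inE; apply/forallP=> i; apply/forallP=> j; rewrite hgE mxE.
by case: i => [[|[|[|i]]] Hi] //; case: j => [[|[|[|j]]] Hj].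
Qed.

Lemma HeisP g : g \in Heis p -> g = hg (GLval g 0 1) (GLval g 0 2) (GLval g 1 2).
Proof.
rewrite inE => /forallP H; apply: val_inj; apply/matrixP => i j.
have := H i => /forallP/(_ j) /andP[/implyP H1 /implyP H2].
rewrite /= mxE.
case: i H1 H2 => [[|[|[|i]]] Hi] //; case: j => [[|[|[|j]]] Hj] //= H1 H2;
  try (by rewrite (eqP (H1 isT))); try (by rewrite (eqP (H2 isT))).
all: by f_equal; apply: val_inj.
Qed.

End Heis2.

Section Heis3.
Variable p : nat.
Hypothesis p_pr : prime p.
Local Open Scope ring_scope.

Lemma Heis_group_set : group_set (Heis p).
Proof.
apply/group_setP; split; first by rewrite -hg0 Heis_hg.
move=> x y /HeisP -> /HeisP ->; rewrite hgM; exact: Heis_hg.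
Qed.

Canonical Heis_group := Group Heis_group_set.

Lemma Heis_imset : Heis p = [set hg t.1.1 t.1.2 t.2 | t in [set: 'F_p * 'F_p * 'F_p]].
Proof.
apply/setP => g; apply/idP/imsetP => [/HeisP -> | [t _ ->]]; last exact: Heis_hg.
by exists (GLval g 0 1, GLval g 0 2, GLval g 1 2)%R.
Qed.

Lemma card_Heis : #|Heis p| = (p ^ 3)%N.
Proof.
rewrite Heis_imset card_imset; last first.
  by move=> [[a b] c] [[a' b'] c'] /hg_inj [/= -> -> ->].
by rewrite cardsT !card_prod card_Fp // expnS expnS expn1 mulnA.
Qed.

Lemma hgX (a b c : 'F_p) n : (hg a b c ^+ n)%g =
   hg (a *+ n) (b *+ n + (a * c) *+ 'C(n, 2)) (c *+ n).
Proof.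
elim: n => [|n IH]; first by rewrite expg0 !mulr0n addr0 hg0.
rewrite expgSr IH hgM binS bin1 !mulrSr mulrnDr; congr hg; rewrite mulrnAl; ring.
Qed.

Lemma Heis_exp : odd p -> (exponent (Heis p) %| p)%N.
Proof.
move=> op; apply/exponentP => g /HeisP ->; rewrite hgX.
have chp := pchar_Fp p_pr.
have z : forall x : 'F_p, (x *+ p = 0)%R.
  by move=> x; rewrite -mulr_natr (GRing.pcharf0 chp) GRing.mulr0.
have zb : forall x : 'F_p, (x *+ 'C(p, 2) = 0)%R.
  move=> x; rewrite -mulr_natr.
  have /eqP -> : ('C(p, 2)%:R == 0 :> 'F_p)%R.
    rewrite -(GRing.dvdn_pcharf chp) prime_dvd_bin //.
    by have := prime_gt1 p_pr; case: p op => [|[|[|]]].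
  by rewrite GRing.mulr0.
by rewrite !z zb GRing.addr0 hg0.
Qed.

Lemma Heis_nab : ~~ abelian (Heis p).
Proof.
apply/negP => /centsP/(_ (hg 1 0 0) (Heis_hg _ _ _) (hg 0 0 1) (Heis_hg _ _ _)).
rewrite /commute !hgM => /hg_inj [_ ] /eqP.
by rewrite !GRing.mul1r !GRing.mul0r !GRing.add0r GRing.addr0 GRing.oner_eq0.
Qed.

Lemma Heis_isog : odd p -> Heis p \isog p^{1+2}.
Proof.
move=> op; have pH : (p.-group (Heis p))%g by rewrite /pgroup card_Heis pnatX pnat_id.
apply: isog_pX1p2 => //; last exact: card_Heis.
  apply: (p3group_extraspecial pH Heis_nab).
  by rewrite card_Heis pfactorK.
exact: Heis_exp.
Qed.

End Heis3.
Local Open Scope group_scope.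

Lemma gen2_join (gT : finGroupType) (x y : gT) : <<[set x; y]>> = <[x]> <*> <[y]>.
Proof. by rewrite /cycle joing_idl joing_idr. Qed.

Lemma Zp_isog_cycle (gT : finGroupType) (x : gT) a : 1 < a -> #[x] = a ->
  <[x]> \isog [set: 'Z_a].
Proof.
move=> a1 ox; rewrite isog_cyclic_card ?cycle_cyclic // -orderE ox.
apply/andP; split; first by rewrite /= Zp_cycle cycle_cyclic.
by rewrite /= cardsT card_ord Zp_cast.
Qed.

Lemma cyc2_isog (gT : finGroupType) (x y : gT) (a b : nat) :
  commute x y -> #[x] = a -> #[y] = b -> <[x]> :&: <[y]> = 1 -> 1 < a -> 1 < b ->
  <<[set x; y]>> \isog [set: ('Z_a * 'Z_b)%type].
Proof.
move=> cxy ox oy tI a1 b1.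
have cXY : <[y]> \subset 'C(<[x]>).
  exact: cents_cycle.
have dG : <[x]> \x <[y]> = <<[set x; y]>>.
  by rewrite dprodEY // gen2_join.
have -> : [set: ('Z_a * 'Z_b)%type] = setX [set: 'Z_a] [set: 'Z_b].
  by apply/setP=> [[u v]]; rewrite !inE.
apply: (isog_dprod dG (setX_dprod _ _)).
  apply: isog_trans (Zp_isog_cycle a1 ox) _; exact: isog_setX1.
apply: isog_trans (Zp_isog_cycle b1 oy) _; exact: isog_set1X.
Qed.

Lemma ext2_D8 (gT : finGroupType) (G : {group gT}) x y :
  #|G| = 8 -> x \in G -> #[x] = 4 -> y \in G :\: <[x]> -> G \isog 'D_8 -> #[y] = 2.
Proof.
move=> oG Gx ox Gy iso.
have gen : extremal_generators G 2 3 (x, y) by split.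
have cD : extremal_class G = Dihedral by apply/dihedral_classP; exists 3.
have e2 : extremal2 G by rewrite /extremal2 cD.
have h : (extremal_class G == SemiDihedral) ==> (#[y] == 2) by rewrite cD.
have [[_ H _ _] _ _ _ _] := extremal2_structure gen e2 h.
by move: H; rewrite cD /= => /(_ y Gy).
Qed.

Lemma ext2_Q8 (gT : finGroupType) (G : {group gT}) x y :
  #|G| = 8 -> x \in G -> #[x] = 4 -> y \in G :\: <[x]> -> G \isog 'Q_8 -> #[y] = 4.
Proof.
move=> oG Gx ox Gy iso.
have gen : extremal_generators G 2 3 (x, y) by split.
have cD : extremal_class G = Quaternion by apply/quaternion_classP; exists 3.
have e2 : extremal2 G by rewrite /extremal2 cD.
have h : (extremal_class G == SemiDihedral) ==> (#[y] == 2) by rewrite cD.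
have [[_ H _ _] _ _ _ _] := extremal2_structure gen e2 h.
by move: H; rewrite cD /= => /(_ y Gy).
Qed.

Lemma Mod_Up p : prime p -> modular_gtype (p ^ 3)%N = Up_type p 1.
Proof.
move=> pp; rewrite /modular_gtype /Up_type pdiv_pfactor //.
have p0 : 0 < p by apply: prime_gt0.
have -> : (p ^ 3 %/ p = p ^ 2)%N by rewrite expnS mulKn.
have -> : (p ^ 2 %/ p = p)%N by rewrite expnS mulKn ?expn1.
by rewrite mul1n add1n.
Qed.

Lemma ext_odd (gT : finGroupType) (G : {group gT}) p x :
  prime p -> odd p -> #|G| = (p ^ 3)%N -> ~~ abelian G -> x \in G -> #[x] = (p ^ 2)%N ->
  isog_Up G p.
Proof.
move=> pp op oG nab Gx ox.
have pG : p.-group G by rewrite /pgroup oG pnatX pnat_id.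
have p1 := prime_gt1 pp; have p0 := prime_gt0 pp.
have iX : #|G : <[x]>| = p.
  by rewrite -divgS ?cycle_subG // oG -orderE ox (expnS p 2) mulnK // expn_gt0 p0.
have sXG : <[x]> \subset G by rewrite cycle_subG.
have := maximal_cycle_extremal pG nab (cycle_cyclic x) sXG iX.
have -> : (p == 2) = false by apply/eqP => p2; rewrite p2 in op.
rewrite orbF => /eqP /modular_group_classP [q qp [n nle iso]].
have n2 : 2 < n by apply: leq_trans nle; rewrite leq_addl.
have := card_isog iso; rewrite card_modular_group // oG => e.
have qp' : q = p.
  apply/eqP; rewrite -(dvdn_prime2 qp pp).
  have : (q %| p ^ 3)%N by rewrite e -(subnKC n2) expnS dvdn_mulr.
  by rewrite Euclid_dvdX // andbT.
subst q; move/eqP: e; rewrite eqn_exp2l // => /eqP n3; rewrite -n3 in iso.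
exists 1%N; split; first by rewrite coprime1n.
by rewrite -Mod_Up.
Qed.


Theorem lemma4p2 (p : nat) (gT rT : finGroupType) (Mhat : {group gT})
    (M : {group rT}) (f : {morphism Mhat >-> rT})
    (m1 m2 : rT) (x1 x2 : gT) :
  prime p ->
  p.-abelem M ->
  f @* Mhat = M ->
  #|'ker f| = p ->
  'ker f \subset 'Phi(Mhat) ->
  m1 \in M -> m2 \in M ->
  'r(<<[set m1; m2]>>) = 2 ->
  x1 \in Mhat -> x2 \in Mhat -> f x1 = m1 -> f x2 = m2 ->
  let L := <<[set x1; x2]>> in
  (* (i) *)
  ((m1 \in V f M p) -> (m2 \in V f M p) ->
     (p = 2 -> L \isog [set: ('Z_2 * 'Z_2)%type] \/ L \isog 'D_8)
     /\ (p <> 2 ->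
          L \isog [set: ('Z_p * 'Z_p)%type]
          \/ isog_Up L p
          \/ (L \isog Heis p /\ <[ [~ x1, x2] ]> = 'ker_L f)))
  /\
  (* (ii) *)
  ((m1 \in M :\: V f M p) -> (m2 \in M :\: V f M p) ->
     (p = 2 -> L \isog [set: ('Z_4 * 'Z_2)%type] \/ L \isog 'Q_8)
     /\ (p <> 2 -> L \isog [set: ('Z_(p ^ 2) * 'Z_p)%type] \/ isog_Up L p))
  /\
  (* (iii) *)
  ((m1 \in V0 f M p) -> (m2 \in M :\: V f M p) ->
     L \isog [set: ('Z_(p ^ 2) * 'Z_p)%type] \/ isog_Up L p).
Proof.
move=> pp abM imf kp _ m1M m2M rk x1D x2D fx1 fx2 L.
have p1 := prime_gt1 pp; have p0 := prime_gt0 pp.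
set K := 'ker f.
have pM : p.-group M := abelem_pgroup abM.
have sKD : K \subset Mhat by apply: normal_sub (ker_normal f).
have oMh : #|Mhat| = (p * #|M|)%N.
  by rewrite -imf card_morphim setIid -kp -(LagrangeI Mhat K) (setIidPr sKD).
have pMh : p.-group Mhat by rewrite /pgroup oMh pnatM pnat_id.
have cK : K \subset 'Z(Mhat).
  apply: prime_meetG; first by rewrite kp.
  apply: meet_center_nil; first exact: pgroup_nil pMh.
    exact: ker_normal.
  by rewrite -cardG_gt1 kp.
have commK : forall k y, k \in K -> y \in Mhat -> commute k y.
  by move=> k y kK yD; have /centerP [_ ck] := subsetP cK k kK; exact: ck.
set E := <<[set m1; m2]>>.
have sEM : E \subset M by rewrite gen_subG subUset !sub1set m1M m2M.
have abE : p.-abelem E := abelemS sEM abM.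
have oE : #|E| = (p ^ 2)%N.
  by rewrite (card_pgroup (abelem_pgroup abE)) -(rank_abelem abE) rk.
have m2n : m2 \notin <[m1]>.
  apply/negP => h; have : E \subset <[m1]> by rewrite gen_subG subUset !sub1set cycle_id h.
  by move/rankS; rewrite rk rank_cycle; case: (m1 != 1).
have m1n : m1 \notin <[m2]>.
  apply/negP => h; have : E \subset <[m2]> by rewrite gen_subG subUset !sub1set cycle_id h.
  by move/rankS; rewrite rk rank_cycle; case: (m2 != 1).
have m1n1 : m1 != 1 by apply: contraNneq m1n => ->; exact: group1.
have m2n1 : m2 != 1 by apply: contraNneq m2n => ->; exact: group1.
have ordM : forall m, m \in M -> m ^+ p = 1.
  move=> m mM; case: (eqVneq m 1) => [->|mn]; first exact: expg1n.
  by rewrite -(abelem_order_p abM mM mn) expg_order.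
have xpK : forall x, x \in Mhat -> x ^+ p \in K.
  move=> x xD; apply/kerP; first exact: groupX.
  by rewrite morphX // ordM // -imf mem_morphim.
have sLM : L \subset Mhat by rewrite gen_subG subUset !sub1set x1D x2D.
have x1L : x1 \in L by rewrite mem_gen // !inE eqxx.
have x2L : x2 \in L by rewrite mem_gen // !inE eqxx orbT.
have fL : f @* L = E.
  rewrite morphim_gen ?subUset ?sub1set ?x1D ?x2D // morphimU !morphim_set1 //.
  by rewrite fx1 fx2.
have x2n : x2 \notin <[x1]>.
  by apply: contra m2n => h; rewrite -fx2 -fx1 -morphim_cycle // mem_morphim.
have x1n : x1 \notin <[x2]>.
  by apply: contra m1n => h; rewrite -fx2 -fx1 -morphim_cycle // mem_morphim.
have oL : #|L| = (#|L :&: K| * p ^ 2)%N.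
  have := card_morphim f L; rewrite fL (setIidPr sLM) oE => ->.
  by rewrite LagrangeI.
have dKL : (#|L :&: K| %| p)%N by rewrite -kp cardSg // subsetIr.
set c := [~ x1, x2].
have cKL : c \in L :&: K.
  rewrite inE groupR //; apply/kerP; first exact: groupR.
  rewrite morphR // fx1 fx2; apply/eqP/commgP.
  by have /centsP := abelem_abelian abM; apply.
have ordV : forall m x, m \in V0 f M p -> x \in Mhat -> f x = m -> #[x] = p.
  move=> m x; rewrite inE => /andP[_ /andP[_ /forall_inP H]] xD fxm.
  by have := H x xD; rewrite fxm eqxx /= => /eqP.
have ordNV : forall m x, m \in M :\: V f M p -> x \in Mhat -> f x = m ->
    x ^+ p != 1 /\ #[x] = (p ^ 2)%N.
  move=> m x /setDP [mM mNV] xD fxm.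
  have mn1 : m != 1 by apply: contraNneq mNV => ->; rewrite /V setU11.
  have mNV0 : m \notin V0 f M p by apply: contra mNV => h; rewrite /V setU1r.
  have : ~~ [forall y in Mhat, (f y == m) ==> (#[y] == p)].
    by move: mNV0; rewrite inE mM mn1.
  case/forall_inPn => y yD; rewrite negb_imply => /andP [/eqP fym oy].
  set k := y^-1 * x.
  have kK : k \in K.
    apply/kerP; first by rewrite groupM ?groupV.
    by rewrite morphM ?groupV // morphV // fym fxm mulVg.
  have ex : x = y * k by rewrite /k mulKVg.
  have kp1 : k ^+ p = 1 by rewrite -kp expg_cardG.
  have xp : x ^+ p = y ^+ p.
    by rewrite ex expgMn ?kp1 ?mulg1 //; apply: commute_sym; apply: commK.
  have yp : y ^+ p != 1.
    apply: contra oy => /eqP yp1; apply/eqP; apply: nt_prime_order => //.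
    by apply: contraNneq mn1 => y1; rewrite -fym y1 morph1.
  have xp1 : x ^+ p != 1 by rewrite xp.
  split => //.
  have : (#[x] %| p ^ 2)%N.
    by rewrite order_dvdn (expnS p 1) expn1 expgM; have := expg_cardG (xpK x xD); rewrite kp => ->.
  case/(dvdn_pfactor _ _ pp) => [[|[|[|j]]] // _ ox].
    by move: xp1; rewrite -order_dvdn ox expn0 dvd1n.
  by move: xp1; rewrite -order_dvdn ox expn1 dvdnn.
have abL : commute x1 x2 -> abelian L.
  move=> com; rewrite /L gen2_join abelianY !cycle_abelian /=.
  exact: cents_cycle.
have Labc : abelian L -> commute x1 x2.
  by move/centsP/(_ x1 x1L x2 x2L).
have KLc : L :&: K = 1 \/ #|L :&: K| = p.
  case/primeP: pp => _ /(_ _ dKL) /orP[/eqP h|/eqP h]; [left; exact: card1_trivg h | by right].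
have p21 : 1 < p ^ 2 by rewrite -{1}(expn0 p) ltn_exp2l.
have oL3 : #|L :&: K| = p -> #|L| = (p ^ 3)%N by move=> Kp; rewrite oL Kp -expnS.
have nt1 : forall x, x \in Mhat -> f x != 1 -> x != 1.
  by move=> x _; apply: contraNneq => ->; rewrite morph1.
split; [|split].
- move=> V1 V2.
  have m1V0 : m1 \in V0 f M p by move: V1; rewrite /V in_setU1 (negbTE m1n1).
  have m2V0 : m2 \in V0 f M p by move: V2; rewrite /V in_setU1 (negbTE m2n1).
  have o1 := ordV m1 x1 m1V0 x1D fx1.
  have o2 := ordV m2 x2 m2V0 x2D fx2.
  case: KLc => [K1|Kp].
    have com : commute x1 x2.
      by apply/commgP; move: cKL; rewrite K1 inE.
    have TI : <[x1]> :&: <[x2]> = 1.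
      by rewrite setIC prime_TIg ?cycle_subG // -orderE o2.
    have iso := cyc2_isog com o1 o2 TI p1 p1.
    split => [p2|_]; left; last exact: iso.
    by rewrite p2 in iso.
  have oL' := oL3 Kp.
  have nab : ~~ abelian L.
    apply/negP => /Labc com.
    have : (#|L| %| #[x1] * #[x2])%N.
      by rewrite /L gen2_join cent_joinEl ?cents_cycle // !orderE dvdn_cardMg.
    by rewrite oL' o1 o2 mulnn dvdn_Pexp2l.
  have pL : p.-group L by rewrite /pgroup oL' pnatX pnat_id.
  split => [p2|np2].
    right; rewrite p2 in o1 o2 oL'.
    have ne : x1 != x2 by apply: contraNneq x2n => <-; exact: cycle_id.
    have := involutions_gen_dihedral o1 o2 ne.
    by rewrite -/L oL'.
  have op : odd p by case: (even_prime pp).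
  right; right.
  have esL : extraspecial L by apply: p3group_extraspecial pL nab _; rewrite oL' pfactorK.
  have expL : (exponent L %| p)%N.
    have -> : L = 'Ohm_1(L).
      apply/eqP; rewrite eqEsubset Ohm_sub andbT (OhmE 1 pL) genS //.
      by rewrite subUset !sub1set !inE x1L x2L /= expn1 -!order_dvdn o1 o2 dvdnn.
    rewrite exponent_Ohm1_class2 // nil_class2.
    by have [[_ ->] _ ] := esL.
  have isoL : L \isog p^{1+2} by apply: isog_pX1p2.
  split.
    apply: isog_trans isoL _; rewrite isog_sym; exact: Heis_isog.
  have c1 : c != 1.
    apply/negP => /commgP com; by rewrite abL in nab.
  apply/eqP; rewrite eqEcard cycle_subG cKL /= Kp -orderE.
  rewrite (nt_prime_order pp) //.
  by have := expg_cardG cKL; rewrite Kp.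
- move=> N1 N2.
  have [x1p o1] := ordNV m1 x1 N1 x1D fx1.
  have [x2p o2] := ordNV m2 x2 N2 x2D fx2.
  have x1pKL : x1 ^+ p \in L :&: K by rewrite inE groupX // xpK.
  have x2pKL : x2 ^+ p \in L :&: K by rewrite inE groupX // xpK.
  have Kp : #|L :&: K| = p.
    by case: KLc => // K1; move: x1pKL; rewrite K1 inE (negbTE x1p).
  have oL' := oL3 Kp.
  have pL : p.-group L by rewrite /pgroup oL' pnatX pnat_id.
  case: (boolP (abelian L)) => [abL' | nab].
    have com := Labc abL'.
    have x2pC : x2 ^+ p \in <[x1 ^+ p]>.
      have sub : L :&: K \subset <[x1 ^+ p]>.
        apply: prime_meetG; first by rewrite Kp.
        by apply/trivgPn; exists (x1 ^+ p); rewrite // inE x1pKL cycle_id.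
      exact: subsetP sub _ x2pKL.
    case/cycleP: x2pC => k ek.
    set y := x2 * (x1 ^+ k)^-1.
    have yL : y \in L by rewrite groupM ?groupV ?groupX.
    have yn : y \notin <[x1]>.
      apply: contra x2n => h.
      have -> : x2 = y * x1 ^+ k by rewrite /y mulgKV.
      by rewrite groupM // mem_cycle.
    have yp : y ^+ p = 1.
      rewrite /y expgMn; last by apply: commuteV; apply: commuteX; apply: commute_sym.
      by rewrite ek expVgn -!expgM mulnC mulgV.
    have oy : #[y] = p.
      by apply: nt_prime_order => //; apply: contraNneq yn => ->; exact: group1.
    have cy : commute x1 y.
      apply: commuteM => //; apply: commuteV; apply: commuteX; exact: commute_refl.
    have TI : <[x1]> :&: <[y]> = 1.
      by rewrite setIC prime_TIg ?cycle_subG // -orderE oy.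
    have iso := cyc2_isog cy o1 oy TI p21 p1.
    have eqL : <<[set x1; y]>> = L.
      apply/eqP; rewrite eqEcard gen_subG subUset !sub1set x1L yL /= (card_isog iso) oL'.
      by rewrite cardsT card_prod !card_ord !Zp_cast // -expnSr.
    rewrite eqL in iso.
    split => [p2|_]; left; last exact: iso.
    by rewrite p2 in iso.
  have x2nL : x2 \in L :\: <[x1]> by rewrite inE x2n x2L.
  split => [p2|np2].
    right; rewrite p2 in o1 o2 oL' pL.
    have := card_isog8_extraspecial oL' (p3group_extraspecial pL nab _).
    rewrite oL' pfactorK // => /(_ isT) /orP [D|//].
    by have := ext2_D8 oL' x1L o1 x2nL D; rewrite o2.
  have op : odd p by case: (even_prime pp).
  by right; apply: ext_odd pp op oL' nab x1L o1.
- move=> V1 N2.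
  have o1 := ordV m1 x1 V1 x1D fx1.
  have [x2p o2] := ordNV m2 x2 N2 x2D fx2.
  have x2pKL : x2 ^+ p \in L :&: K by rewrite inE groupX // xpK.
  have Kp : #|L :&: K| = p.
    by case: KLc => // K1; move: x2pKL; rewrite K1 inE (negbTE x2p).
  have oL' := oL3 Kp.
  have pL : p.-group L by rewrite /pgroup oL' pnatX pnat_id.
  case: (boolP (abelian L)) => [abL' | nab].
    have com := Labc abL'.
    have TI : <[x2]> :&: <[x1]> = 1.
      by rewrite setIC prime_TIg ?cycle_subG // -orderE o1.
    have iso := cyc2_isog (commute_sym com) o2 o1 TI p21 p1.
    have eqL : <<[set x2; x1]>> = L by rewrite /L setUC.
    by rewrite eqL in iso; left.
  have x1nL : x1 \in L :\: <[x2]> by rewrite inE x1n x1L.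
  right; case: (even_prime pp) => [p2|op]; last exact: ext_odd pp op oL' nab x2L o2.
  rewrite p2 in o1 o2 oL' pL *.
  have := card_isog8_extraspecial oL' (p3group_extraspecial pL nab _).
  rewrite oL' pfactorK // => /(_ isT) /orP [D|Q].
    by exists 1%N; split.
  by have := ext2_Q8 oL' x2L o2 x1nL Q; rewrite o1.
Qed.
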